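(* Consider the two-bidder bidding game (defined in the context) in which both bidders have made the same ex-ante latency investment, so that $t_1=t_2$. Then this bidding game has a completely separating Bayesian Nash equilibrium, i.e. one in which each bidder's bid is a strictly increasing function of its valuation.
   Context: Fix a parameter $g>0$ and the boost function $\pi(b)=\frac{gb}{b+1}$ for $b\ge0$. Two bidders $i\in\{1,2\}$ have fixed latencies (timestamps) $t_1,t_2$ that are commonly known. Each bidder privately learns its valuation $v_i$, with $v_1,v_2$ independent and uniformly distributed on $[0,1]$, and then chooses a bid $b_i\ge0$. The bidder's score is $\pi(b_i)-t_i$; the bidder with the higher score has its transaction ordered first and receives its valuation. Bids are paid regardless of the outcome (all-pay), so bidder $i$'s payoff is $v_i\cdot\mathbf{1}[\text{$i$ has the higher score}]-b_i$. *)

(* Defs.v *)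
From HB Require Import structures.
From mathcomp Require Import all_boot all_order all_algebra.
From mathcomp Require Import all_classical all_reals all_analysis.
Set Implicit Arguments. Unset Strict Implicit. Unset Printing Implicit Defensive.
Import Order.TTheory GRing.Theory Num.Theory.
Local Open Scope classical_set_scope.
Local Open Scope ring_scope.

Section TwoBidderGame.
Variable R : realType.

Definition boost (g b : R) : R := g * b / (b + 1).

Definition score (g t b : R) : R := boost g b - t.

(* A strategy maps a valuation in [0,1] to a bid. *)
Definition strategy := R -> R.

Definition feasible (s : strategy) : Prop :=
  forall v, 0 <= v <= 1 -> 0 <= s v.

(* Interim (expected) payoff of a bidder with latency ti, valuation v,
   bidding b, against an opponent with latency tj using strategy sj, whose
   valuation w is uniform on [0,1] (Lebesgue measure on [0,1]). Payoff is v*P(win) - b (all-pay). *)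
Definition win_prob (g ti tj b : R) (sj : strategy) : \bar R :=
  lebesgue_measure [set w : R | 0 <= w <= 1 /\ score g tj (sj w) < score g ti b].

Definition interim_payoff (g ti tj v b : R) (sj : strategy) : \bar R :=
  (v%:E * win_prob g ti tj b sj - b%:E)%E.

Definition bayes_nash_eq (g t1 t2 : R) (s1 s2 : strategy) : Prop :=
  feasible s1 /\ feasible s2 /\
  (forall v b, 0 <= v <= 1 -> 0 <= b ->
     (interim_payoff g t1 t2 v b s2 <= interim_payoff g t1 t2 v (s1 v) s2)%E) /\
  (forall v b, 0 <= v <= 1 -> 0 <= b ->
     (interim_payoff g t2 t1 v b s1 <= interim_payoff g t2 t1 v (s2 v) s1)%E).

Definition separating (s : strategy) : Prop :=
  forall v w, 0 <= v -> v < w -> w <= 1 -> s v < s w.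

End TwoBidderGame.

(* Main.v *)
Require Import Defs.
From HB Require Import structures.
From mathcomp Require Import all_boot all_order all_algebra.
From mathcomp Require Import all_classical all_reals all_analysis.
From mathcomp Require Import ring lra.
Import Order.TTheory GRing.Theory Num.Theory.
Local Open Scope ring_scope.

Section Aux.
Variable R : realType.
Local Open Scope classical_set_scope.

Lemma boost_lt (g x y : R) : 0 < g -> 0 <= x -> 0 <= y ->
  (boost g x < boost g y) = (x < y).
Proof.
move=> g0 x0 y0; rewrite /boost.
have x1 : 0 < x + 1 by lra.
have y1 : 0 < y + 1 by lra.
rewrite ltr_pdivrMr // mulrAC ltr_pdivlMr //.
apply/idP/idP => H.
- have : g * (x - y) < 0 by rewrite mulrBr; nra.
  rewrite pmulr_rlt0 //; lra.
- have : g * (x - y) < 0 by rewrite pmulr_rlt0 //; lra.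
  rewrite mulrBr; nra.
Qed.

Definition sq (v : R) : R := v ^+ 2 / 2.

Lemma win_eq (g t b : R) : 0 < g -> 0 <= b ->
  win_prob g t t b sq = lebesgue_measure [set w : R | 0 <= w <= 1 /\ sq w < b].
Proof.
move=> g0 b0; rewrite /win_prob; congr (lebesgue_measure _).
apply/seteqP; split => w /= [H1 H2]; split => //.
- move: H2; rewrite /score ltrBlDr subrK boost_lt //.
  rewrite /sq; case/andP: H1 => ? ?; nra.
- rewrite /score ltrBlDr subrK boost_lt //.
  rewrite /sq; case/andP: H1 => ? ?; nra.
Qed.

Lemma win_at (v : R) : 0 <= v <= 1 ->
  lebesgue_measure [set w : R | 0 <= w <= 1 /\ sq w < sq v] = v%:E.
Proof.
case/andP=> v0 v1.
have -> : [set w : R | 0 <= w <= 1 /\ sq w < sq v] = [set` `[0, v[%R].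
  apply/seteqP; split => w /=; rewrite in_itv /= /sq.
  - case=> /andP[w0 w1] H; apply/andP; split => //.
    rewrite ltNge; apply/negP => Hw; nra.
  - case/andP=> w0 wv; split; first by apply/andP; split => //; lra.
    nra.
rewrite lebesgue_measure_itv /= lte_fin.
case: ifPn => H; first by rewrite ?subr0 ?sube0 /=; congr (_%:E); rewrite ?subr0.
have -> : v = 0 by rewrite -leNgt in H; lra.
by [].
Qed.

Lemma win_any (b : R) : 0 <= b -> exists r : R,
  lebesgue_measure [set w : R | 0 <= w <= 1 /\ sq w < b] = r%:E /\
  0 <= r /\ r ^+ 2 <= 2 * b.
Proof.
move=> b0.
have [Hb|Hb] := leP (2 * b) 1.
- set c := Num.sqrt (2 * b).
  have c0 : 0 <= c by rewrite sqrtr_ge0.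
  have cc : c ^+ 2 = 2 * b by rewrite sqr_sqrtr //; lra.
  have c1 : c <= 1 by nra.
  exists c; split; last by split => //; rewrite cc.
  have -> : [set w : R | 0 <= w <= 1 /\ sq w < b] = [set` `[0, c[%R].
    apply/seteqP; split => w /=; rewrite in_itv /= /sq.
    - case=> /andP[w0 w1] H; apply/andP; split => //.
      rewrite ltNge; apply/negP => Hw; nra.
    - case/andP=> w0 wv; split; first by apply/andP; split => //; lra.
      nra.
  rewrite lebesgue_measure_itv /= lte_fin.
  case: ifPn => H; first by rewrite ?subr0 ?sube0 /=; congr (_%:E); rewrite ?subr0.
  have -> : c = 0 by rewrite -leNgt in H; lra.
  by [].
- exists 1; split; last by split; lra.
  have -> : [set w : R | 0 <= w <= 1 /\ sq w < b] = [set` `[0, 1]%R].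
    apply/seteqP; split => w /=; rewrite in_itv /= /sq.
    - by case.
    - case/andP=> w0 w1; split; first by apply/andP; split.
      nra.
  by rewrite lebesgue_measure_itv /= lte_fin ltr01 ?sube0 /=; congr (_%:E); rewrite ?subr0.
Qed.

Lemma sq_ge0 (v : R) : 0 <= sq v.
Proof. rewrite /sq; nra. Qed.

Lemma best (g t v b : R) : 0 < g -> 0 <= v <= 1 -> 0 <= b ->
  (interim_payoff g t t v b sq <= interim_payoff g t t v (sq v) sq)%E.
Proof.
move=> g0 vv b0; rewrite /interim_payoff win_eq // win_eq //; last exact: sq_ge0.
rewrite win_at //.
have [r [-> [r0 r2]]] := win_any _ b0.
rewrite -!EFinM -!EFinB lee_fin /sq.
case/andP: vv => v0 v1.
rewrite -subr_ge0.
have -> : v * v - v ^+ 2 / 2 - (v * r - b) = (v - r) ^+ 2 / 2 + (b - r ^+ 2 / 2)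
  by rewrite /GRing.exp /=; field.
apply: addr_ge0; first by apply: divr_ge0 => //; exact: sqr_ge0.
lra.
Qed.

End Aux.

Theorem proposition4 (R : realType) (g t1 t2 : R) :
  0 < g -> t1 = t2 ->
  exists s1 s2 : strategy R,
    bayes_nash_eq g t1 t2 s1 s2 /\ separating s1 /\ separating s2.
Proof.
move=> g0 <-.
have sep : separating (@sq R).
  move=> v w v0 vw w1; rewrite /sq; nra.
exists (@sq R), (@sq R); split; last by split.
split; first by move=> v _; exact: sq_ge0.
split; first by move=> v _; exact: sq_ge0.
by split => v b vv b0; apply: best.
Qed.
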